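(* Let $\phi$ be an instance of \textsc{Max (2,3)-SAT} with $n$ variables and let $T_\phi$ be the tournament instance constructed from $\phi$ as described in the context. If $\phi$ admits an assignment that satisfies at least $k$ clauses, then $T_\phi$ has a seeding whose tournament value is at least $k+n$.
   Context: Tournament model: players form a finite set of size $2^{n'}$ totally ordered by strength (stronger beats weaker). A seeding is a bijection $\sigma$ from players to $[2^{n'}]$. In round $r=1,\dots,n'$, for each block of seed positions $\{(k-1)2^r+1,\dots,k2^r\}$, the winner $a$ of its first half $\{(k-1)2^r+1,\dots,(k-1)2^r+2^{r-1}\}$ plays the winner $b$ of its second half (a single-position block is won by the player seeded there), the stronger one wins the block, and the game has value $v(a,b,r)$. The tournament value is the sum of values of all games played. \textsc{Max (2,3)-SAT} instance: a CNF formula $\phi$ with variables $x_1,\dots,x_n$ and clauses $c_1,\dots,c_m$, each clause having exactly two literals and each variable appearing in at most three clauses; the occurrences of each variable $x$ as a literal are numbered $1,2,3$ (its $j$th appearance) in a fixed order. Construction of $T_\phi$: let $n'$ be the smallest integer with $16n\le 2^{n'}$ and $p=2^{n'}-16n$. Players: for each variable $x$, three variable players $x,x^T,x^F$; for each clause $c$, one clause player $c$; and dummy players $f_1,\dots,f_{13n+p-m}$. Strength order (strongest first): $x_1>x_1^T>x_1^F>x_2>x_2^T>x_2^F>\dots>x_n>x_n^T>x_n^F>c_1>\dots>c_m>f_1>\dots>f_{13n+p-m}$. Game values: for each variable $x$, $v(x,x^T,1)=v(x^T,x,1)=v(x,x^F,1)=v(x^F,x,1)=1$; for each clause $c$ and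 each literal of $c$ that is the $j$th appearance of variable $x$, if $x$ appears non-negated there set $v(c,x^T,j)=v(x^T,c,j)=1$, and otherwise set $v(c,x^F,j)=v(x^F,c,j)=1$; all other values $v(a,b,r)$ for $r\in[n']$ are $0$. *)

(* Defs.v *)
From mathcomp Require Import all_boot all_fingroup.
Set Implicit Arguments. Unset Strict Implicit. Unset Printing Implicit Defensive.

(* Players are the ordinals 'I_(2^K); player a is stronger than player b iff
   a < b (index 0 = strongest).  Seed positions are 0-indexed: position q here
   is seed q+1 of the paper.  A seeding sigma maps players to positions. *)

Definition stronger (N : nat) (a b : 'I_N) : 'I_N := if a < b then a else b.

Lemma pos0_proof (K : nat) : 0 < 2 ^ K.
Proof. by rewrite expn_gt0. Qed.

Definition pos0 (K : nat) : 'I_(2 ^ K) := Ordinal (pos0_proof K).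

Definition player_at (K : nat) (sigma : {perm 'I_(2 ^ K)}) (q : nat) : 'I_(2 ^ K) :=
  (sigma^-1)%g (insubd (pos0 K) q).

Fixpoint winner (K : nat) (sigma : {perm 'I_(2 ^ K)}) (r k : nat) : 'I_(2 ^ K) :=
  if r is r'.+1 then
    stronger (winner sigma r' k.*2) (winner sigma r' k.*2.+1)
  else player_at sigma k.

Definition tournament_value (K : nat) (v : 'I_(2 ^ K) -> 'I_(2 ^ K) -> nat -> nat)
  (sigma : {perm 'I_(2 ^ K)}) : nat :=
  \sum_(1 <= r < K.+1) \sum_(0 <= k < 2 ^ (K - r))
     v (winner sigma r.-1 k.*2) (winner sigma r.-1 k.*2.+1) r.

(* Variables 'I_n, clauses 'I_m; clause c has exactly two literals
   lit c false, lit c true; a literal is (variable, true iff non-negated).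
   occ c l : 'I_3 is (j - 1) where the literal (c,l) is the j-th appearance
   of its variable.  The numbering must be injective among the appearances of
   each variable, which also forces each variable to appear at most 3 times. *)
Definition occurrence_numbering (n m : nat) (lit : 'I_m -> bool -> 'I_n * bool)
  (occ : 'I_m -> bool -> 'I_3) : Prop :=
  forall (c c' : 'I_m) (l l' : bool),
    (lit c l).1 = (lit c' l').1 -> occ c l = occ c' l' -> c = c' /\ l = l'.

Definition clause_sat (n m : nat) (lit : 'I_m -> bool -> 'I_n * bool)
  (a : 'I_n -> bool) (c : 'I_m) : bool :=
  [exists l : bool, a (lit c l).1 == (lit c l).2].

Definition nprime (n : nat) : nat := up_log 2 (16 * n).

(* Player encoding (strength order = index order):
   index 3i, 3i+1, 3i+2 (i < n) : x_i, x_i^T, x_i^F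
   index 3n + j (j < m)         : clause c_j
   remaining indices            : dummies f_1, f_2, ... *)

(* v(x, x^T, 1) = v(x, x^F, 1) = 1 (one direction) *)
Definition var_game (n : nat) (a b r : nat) : bool :=
  [&& a < 3 * n, b < 3 * n, a %% 3 == 0, b %/ 3 == a %/ 3, b %% 3 != 0 & r == 1].

(* v(c, x^T, j) = 1 if the j-th appearance of x is a non-negated literal of c,
   v(c, x^F, j) = 1 if it is a negated literal of c (one direction) *)
Definition clause_game (n m : nat) (lit : 'I_m -> bool -> 'I_n * bool)
  (occ : 'I_m -> bool -> 'I_3) (a b r : nat) : bool :=
  [&& 3 * n <= a, a < 3 * n + m, b < 3 * n &
   [exists c : 'I_m, [exists l : bool,
      [&& val c == a - 3 * n, val (lit c l).1 == b %/ 3, (occ c l).+1 == r &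
          b %% 3 == (if (lit c l).2 then 1 else 2)]]]].

Definition Tphi_value (n m : nat) (lit : 'I_m -> bool -> 'I_n * bool)
  (occ : 'I_m -> bool -> 'I_3) (a b : 'I_(2 ^ nprime n)) (r : nat) : nat :=
  [|| var_game n a b r, var_game n b a r,
      clause_game lit occ a b r | clause_game lit occ b a r].

(* Main.v *)
Require Import Defs.
From mathcomp Require Import all_boot all_fingroup.
From mathcomp Require Import zify.

Lemma perm_extend (T : finType) (D : {set T}) (f : T -> T) :
  {in D &, injective f} -> exists s : {perm T}, forall x, x \in D -> s x = f x.
Proof.
move=> injf.
set eA := enum (~: D). set eB := enum (~: [set f x | x in D]).
have szAB : size eA = size eB.
  rewrite /eA /eB -!cardE.
  have h1 := cardsCs D. have h2 := cardsCs [set f x | x in D].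
  rewrite card_in_imset // in h2.
  have h3 : #|~: D| <= #|T| by apply: max_card.
  have h4 : #|~: [set f x | x in D]| <= #|T| by apply: max_card.
  have h5 : #|D| <= #|T| by apply: max_card.
  lia.
have memB : forall x, x \notin D -> nth x eB (index x eA) \in eB.
  by move=> x xD; apply: mem_nth; rewrite -szAB index_mem /eA mem_enum inE xD.
pose g x := if x \in D then f x else nth x eB (index x eA).
have injg : injective g.
  move=> u v; rewrite /g.
  case: ifP => xD; case: ifP => yD.
  - exact: injf.
  - move=> E; have := memB v (negbT yD); rewrite -E /eB mem_enum inE.
    by rewrite imset_f.
  - move=> E; have := memB u (negbT xD); rewrite E /eB mem_enum inE.
    by rewrite imset_f.
  - move=> E.
    have xA : u \in eA by rewrite /eA mem_enum inE xD.
    have yA : v \in eA by rewrite /eA mem_enum inE yD.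
    have hx : index u eA < size eB by rewrite -szAB index_mem.
    have hy : index v eA < size eB by rewrite -szAB index_mem.
    move: E; rewrite (set_nth_default v u hx) => /eqP.
    rewrite nth_uniq ?enum_uniq // => /eqP /(index_inj u xA yA) //.
exists (perm injg) => x xD; by rewrite permE /g xD.
Qed.

Section Win.
Variable K : nat.
Variable sigma : {perm 'I_(2 ^ K)}.

Lemma player_at_val q : q < 2 ^ K -> (sigma (player_at sigma q) : nat) = q.
Proof. by move=> hq; rewrite /player_at permKV val_insubd hq. Qed.

Lemma player_at_eq q p : (sigma p : nat) = q -> player_at sigma q = p.
Proof. by move=> <-; rewrite /player_at valKd permK. Qed.

Lemma winner_spec r k : k.+1 * 2 ^ r <= 2 ^ K ->
  k * 2 ^ r <= sigma (winner sigma r k) < k.+1 * 2 ^ r /\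
  forall p, k * 2 ^ r <= sigma p < k.+1 * 2 ^ r -> winner sigma r k <= p.
Proof.
elim: r k => [|r IH] k.
  rewrite expn0 !muln1 => hk /=; rewrite player_at_val //; split; first lia.
  move=> p hp; have -> : player_at sigma k = p by apply: player_at_eq; lia.
  done.
rewrite expnS => hk /=.
have [h0 h0'] := IH k.*2 ltac:(nia).
have [h1 h1'] := IH k.*2.+1 ltac:(nia).
rewrite /stronger; case: ifP => hlt; split.
- nia.
- move=> p hp; case: (ltnP (sigma p) (k.*2.+1 * 2 ^ r)) => hp1.
    apply: h0'; nia.
  apply: leq_trans (ltnW hlt) _; apply: h1'; nia.
- nia.
- move=> p hp; case: (ltnP (sigma p) (k.*2.+1 * 2 ^ r)) => hp1.
    apply: leq_trans _ (h0' _ _); [lia | nia].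
  apply: h1'; nia.
Qed.

Lemma winner_eq r k (w : 'I_(2 ^ K)) : k.+1 * 2 ^ r <= 2 ^ K ->
  k * 2 ^ r <= sigma w < k.+1 * 2 ^ r ->
  (forall p, k * 2 ^ r <= sigma p < k.+1 * 2 ^ r -> w <= p) ->
  winner sigma r k = w.
Proof.
move=> hk hw hall; have [h1 h2] := @winner_spec r k hk.
apply: val_inj; apply/eqP; rewrite eqn_leq (h2 _ hw) (hall _ h1) //.
Qed.
End Win.

Lemma sum_lb K (F : nat -> nat -> nat) (S : seq (nat * nat)) : uniq S ->
  (forall x, x \in S -> [/\ 1 <= x.1 <= K, x.2 < 2 ^ (K - x.1) & 0 < F x.1 x.2]) ->
  size S <= \sum_(1 <= r < K.+1) \sum_(0 <= k < 2 ^ (K - r)) F r k.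
Proof.
move=> uS hS.
set s := [seq (r, k) | r <- index_iota 1 K.+1, k <- index_iota 0 (2 ^ (K - r))].
have -> : \sum_(1 <= r < K.+1) \sum_(0 <= k < 2 ^ (K - r)) F r k =
          \sum_(x <- s) F x.1 x.2 by rewrite big_allpairs_dep.
apply: (@leq_trans (\sum_(x <- s | x \in S) 1)).
  rewrite sum1_count -size_filter; apply: uniq_leq_size => // x xS.
  rewrite mem_filter xS /=.
  have [h1 h2 _] := hS x xS.
  case: x xS h1 h2 => r k /= _ h1 h2.
  apply/allpairsPdep; exists r, k; split => //.
    by rewrite mem_index_iota; lia.
  by rewrite mem_index_iota; lia.
rewrite big_mkcond /=; apply: leq_sum => x _; case: ifP => // /hS [] //.
Qed.

Definition ordN K q : 'I_(2 ^ K) := insubd (pos0 K) q.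
Lemma ordNE K q : q < 2 ^ K -> (ordN K q : nat) = q.
Proof. by move=> h; rewrite /ordN val_insubd h. Qed.

Section Main.
Variables (n m : nat) (lit : 'I_m -> bool -> 'I_n * bool) (occ : 'I_m -> bool -> 'I_3).
Hypothesis Hocc : occurrence_numbering lit occ.
Variable a : 'I_n -> bool.

Definition lc (c : 'I_m) : bool := ~~ (a (lit c false).1 == (lit c false).2).
Definition cv (c : 'I_m) : 'I_n := (lit c (lc c)).1.
Definition co (c : 'I_m) : nat := occ c (lc c).
Definition cpos (c : 'I_m) : nat := 16 * cv c + 2 ^ co c.
Definition anat (j : nat) : bool := if insub j is Some i then a i else false.
Definition posn (p : nat) : nat :=
  if p < 3 * n then 16 * (p %/ 3) +
     (if p %% 3 == 0 then 8 else if (p %% 3 == 1) == anat (p %/ 3) then 0 else 9)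
  else if insub (p - 3 * n) is Some c then cpos c else 0.

Lemma anatE (i : 'I_n) : anat i = a i.
Proof. by rewrite /anat valK. Qed.

Lemma co_lt c : co c < 3.
Proof. exact: ltn_ord. Qed.

Lemma pow_cases o : o < 3 -> 2 ^ o = 1 \/ 2 ^ o = 2 \/ 2 ^ o = 4.
Proof. by case: o => [|[|[|]]]; auto. Qed.

Lemma posn_var_eq (i t : nat) : i < n -> t < 3 ->
  posn (3 * i + t) = 16 * i + (if t == 0 then 8 else if (t == 1) == anat i then 0 else 9).
Proof.
move=> hi ht; rewrite /posn.
have -> : 3 * i + t < 3 * n by lia.
have -> : (3 * i + t) %/ 3 = i by lia.
have -> : (3 * i + t) %% 3 = t by lia.
done.
Qed.

Lemma posn_cl (c : 'I_m) : posn (3 * n + c) = cpos c.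
Proof.
rewrite /posn; have -> : (3 * n + c < 3 * n) = false by lia.
have -> : 3 * n + c - 3 * n = c :> nat by lia.
by have := valK c; rewrite /= => ->.
Qed.

Lemma posn_var p : p < 3 * n -> exists j, j < n /\
  (posn p = 16 * j \/ posn p = 16 * j + 8 \/ posn p = 16 * j + 9).
Proof.
move=> hp; exists (p %/ 3); split; first lia.
rewrite /posn hp; case: ifP => _; first lia.
case: ifP => _; lia.
Qed.

Lemma posn_clause p : 3 * n <= p < 3 * n + m -> exists (c : 'I_m), p = 3 * n + c.
Proof.
move=> hp; have h : p - 3 * n < m by lia.
exists (Ordinal h) => /=; lia.
Qed.

Lemma cpos_shape (c : 'I_m) : exists v o, [/\ v < n, o < 3 & cpos c = 16 * v + 2 ^ o].
Proof. by exists (cv c), (co c); split => //; apply: co_lt. Qed.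

Lemma posn_div p : p < 3 * n -> 16 * (p %/ 3) <= posn p <= 16 * (p %/ 3) + 9.
Proof. move=> hp; rewrite /posn hp; case: ifP => _; first lia. case: ifP => _; lia. Qed.

Lemma posn_lt p : p < 3 * n + m -> posn p < 16 * n.
Proof.
move=> hp; case: (ltnP p (3 * n)) => h.
  have [j [hj E]] := posn_var _ h; lia.
have [c ->] := @posn_clause p ltac:(lia).
rewrite posn_cl; have [v [o [hv ho ->]]] := cpos_shape c.
have := pow_cases _ ho; lia.
Qed.

Lemma posn_inj p p' : p < 3 * n + m -> p' < 3 * n + m -> posn p = posn p' -> p = p'.
Proof.
move=> hp hp'.
case: (ltnP p (3 * n)) => h; case: (ltnP p' (3 * n)) => h'.
- case: (eqVneq (p %/ 3) (p' %/ 3)) => hj; last first.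
    move=> E; have := posn_div _ h; have := posn_div _ h'; rewrite E; lia.
  rewrite /posn h h' hj.
  have ht : p %% 3 = 0 \/ p %% 3 = 1 \/ p %% 3 = 2 by lia.
  have ht' : p' %% 3 = 0 \/ p' %% 3 = 1 \/ p' %% 3 = 2 by lia.
  case: ht => [ht|[ht|ht]]; case: ht' => [ht'|[ht'|ht']]; rewrite ht ht' /=;
  case: (anat (p' %/ 3)) => /=; lia.
- have [c ->] := @posn_clause p' ltac:(lia).
  rewrite posn_cl; have [v [o [hv ho ->]]] := cpos_shape c.
  have [j [hj E]] := posn_var _ h; have := pow_cases _ ho; lia.
- have [c ->] := @posn_clause p ltac:(lia).
  rewrite posn_cl; have [v [o [hv ho ->]]] := cpos_shape c.
  have [j [hj E]] := posn_var _ h'; have := pow_cases _ ho; lia.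
- have [c ->] := @posn_clause p ltac:(lia).
  have [c' ->] := @posn_clause p' ltac:(lia).
  rewrite !posn_cl /cpos => E.
  have hc := co_lt c; have hc' := co_lt c'.
  have [Eo Ev] : co c = co c' /\ (cv c : nat) = cv c'.
    have := pow_cases _ hc; have := pow_cases _ hc'.
    case: (co c) hc E => [|[|[|]]] //; case: (co c') hc' => [|[|[|]]] //=; lia.
  have [-> _] := Hocc _ _ _ _ (val_inj Ev) (val_inj Eo).
  done.
Qed.


Local Notation KK := (nprime n).
Lemma hN : 16 * n <= 2 ^ KK.
Proof. exact: up_logP. Qed.

Lemma exists_sigma : exists sigma : {perm 'I_(2 ^ KK)},
  forall p : 'I_(2 ^ KK), p < 3 * n + m -> (sigma p : nat) = posn p.
Proof.
have hf : {in [set p : 'I_(2 ^ KK) | p < 3 * n + m] &,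
           injective (fun p : 'I_(2 ^ KK) => ordN KK (posn p))}.
  move=> p q; rewrite !inE => hp hq E.
  have := congr1 val E; rewrite /=.
  have hp' := posn_lt _ hp; have hq' := posn_lt _ hq; have := hN => hN'.
  rewrite !ordNE; try lia.
  by move=> /(posn_inj _ _ hp hq) /val_inj.
have [s hs] := perm_extend _ _ _ hf.
exists s => p hp; rewrite hs ?inE // ordNE //.
have := posn_lt _ hp; have := hN; lia.
Qed.

Section Sig.
Variable sigma : {perm 'I_(2 ^ KK)}.
Hypothesis Hs : forall p : 'I_(2 ^ KK), p < 3 * n + m -> (sigma p : nat) = posn p.

Lemma sig_inj (p q : 'I_(2 ^ KK)) : (sigma p : nat) = sigma q -> p = q.
Proof. by move=> /val_inj /perm_inj. Qed.

Lemma low1 (p : 'I_(2 ^ KK)) j : 16 * j < sigma p < 16 * j + 8 -> 3 * n <= p.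
Proof.
move=> h; case: (ltnP p (3 * n)) => // hp.
have [j' [_ E]] := posn_var _ hp; rewrite -Hs in E; lia.
Qed.

Lemma low2 (p : 'I_(2 ^ KK)) j : 16 * j + 2 < sigma p < 16 * j + 8 ->
  (sigma p : nat) != 16 * j + 4 -> 3 * n + m <= p.
Proof.
move=> h1 h2; case: (ltnP p (3 * n + m)) => // hp.
case: (ltnP p (3 * n)) => hp'.
  have [j' [_ E]] := posn_var _ hp'; rewrite -Hs in E; lia.
have [c hc] := @posn_clause p ltac:(lia).
have := Hs _ hp; rewrite hc posn_cl; have [v [o [hv ho ->]]] := cpos_shape c.
have := pow_cases _ ho; lia.
Qed.

Definition wi (i : 'I_n) := ordN KK (3 * i + (if a i then 1 else 2)).
Definition li (i : 'I_n) := ordN KK (3 * i + (if a i then 2 else 1)).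
Definition xi (i : 'I_n) := ordN KK (3 * i).
Definition cp (c : 'I_m) := ordN KK (3 * n + c).

Lemma wiE i : (wi i : nat) = 3 * i + (if a i then 1 else 2).
Proof. rewrite /wi ordNE //; have := ltn_ord i; have := hN; case: (a i); lia. Qed.
Lemma liE i : (li i : nat) = 3 * i + (if a i then 2 else 1).
Proof. rewrite /li ordNE //; have := ltn_ord i; have := hN; case: (a i); lia. Qed.
Lemma xiE i : (xi i : nat) = 3 * i.
Proof. rewrite /xi ordNE //; have := ltn_ord i; have := hN; lia. Qed.
Lemma m_le : 2 * m <= 3 * n.
Proof.
have inj : injective (fun x : 'I_m * bool => ((lit x.1 x.2).1, occ x.1 x.2)).
  move=> [c l] [c' l'] /= [E1 E2].
  by have [-> ->] := Hocc _ _ _ _ E1 E2.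
have := leq_card _ inj; rewrite !card_prod !card_ord card_bool; lia.
Qed.
Lemma cpE c : (cp c : nat) = 3 * n + c.
Proof. rewrite /cp ordNE //; have := ltn_ord c; have := hN; have := m_le; lia. Qed.

Lemma sig_wi i : (sigma (wi i) : nat) = 16 * i.
Proof.
rewrite Hs wiE; last by have := ltn_ord i; case: (a i); lia.
rewrite posn_var_eq ?ltn_ord //; last by case: (a i).
by rewrite anatE; case: (a i) => /=; lia.
Qed.
Lemma sig_li i : (sigma (li i) : nat) = 16 * i + 9.
Proof.
rewrite Hs liE; last by have := ltn_ord i; case: (a i); lia.
rewrite posn_var_eq ?ltn_ord //; last by case: (a i).
by rewrite anatE; case: (a i) => /=; lia.
Qed.
Lemma sig_xi i : (sigma (xi i) : nat) = 16 * i + 8.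
Proof.
rewrite Hs xiE; last by have := ltn_ord i; lia.
by rewrite -[3 * i]addn0 posn_var_eq ?ltn_ord.
Qed.
Lemma sig_cp c : (sigma (cp c) : nat) = cpos c.
Proof.
rewrite Hs cpE ?posn_cl //; have := ltn_ord c; lia.
Qed.

Lemma win_w (i : 'I_n) o : o < 3 -> winner sigma o (2 ^ (4 - o) * i) = wi i.
Proof.
move=> ho; have hi := ltn_ord i; have hN' := hN.
have hw := sig_wi i; have hwv := wiE i.
have hlow : forall p : 'I_(2 ^ KK), 16 * i < sigma p < 16 * i + 8 -> wi i <= p.
  move=> p hp; have := @low1 p i hp; rewrite hwv; case: (a i); lia.
have hsame : forall p : 'I_(2 ^ KK), (sigma p : nat) = 16 * i -> wi i <= p.
  by move=> p e; rewrite (@sig_inj p (wi i)) ?hw.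
have : o = 0 \/ o = 1 \/ o = 2 by lia.
case=> [->|[->|->]]; rewrite ?subSS ?subn0; apply: winner_eq; rewrite ?hw; try lia;
  move=> p hp; (case: (eqVneq (sigma p : nat) (16 * i)) => e; [exact: hsame | apply: hlow]); lia.
Qed.

Lemma win_c (c : 'I_m) : winner sigma (co c) (2 ^ (4 - co c) * cv c).+1 = cp c.
Proof.
have hi := ltn_ord (cv c); have hN' := hN; have hm := m_le; have hc := ltn_ord c.
have hw := sig_cp c; have hwv := cpE c; rewrite /cpos in hw.
have hlow : forall p : 'I_(2 ^ KK), 16 * cv c + 2 < sigma p < 16 * cv c + 8 ->
   (sigma p : nat) != 16 * cv c + 4 -> cp c <= p.
  move=> p hp hp'; have := @low2 p (cv c) hp hp'; lia.
have hsame : forall p : 'I_(2 ^ KK), (sigma p : nat) = 16 * cv c + 2 ^ co c -> cp c <= p.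
  by move=> p e; rewrite (@sig_inj p (cp c)) ?hw.
have key : forall p : 'I_(2 ^ KK),
    16 * cv c + 2 ^ co c <= sigma p < 16 * cv c + 2 ^ (co c).+1 -> cp c <= p.
  move=> p hp; case: (eqVneq (sigma p : nat) (16 * cv c + 2 ^ co c)) => e.
    exact: hsame.
  have := pow_cases _ (co_lt c); rewrite expnS in hp => hpc.
  apply: hlow; lia.
have : co c = 0 \/ co c = 1 \/ co c = 2 by have := co_lt c; lia.
case=> E; [|case: E => E]; move: key; rewrite E in hw *; rewrite ?subSS ?subn0 => key;
  apply: winner_eq; rewrite ?hw; try lia;
  move=> p hp; apply: key; lia.
Qed.

Lemma win0 q (p : 'I_(2 ^ KK)) : (sigma p : nat) = q -> winner sigma 0 q = p.
Proof. exact: player_at_eq. Qed.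

Lemma KK_ge r : r <= 4 -> 0 < n -> r <= KK /\ 2 ^ (KK - r) * 2 ^ r = 2 ^ KK.
Proof.
move=> hr hn; have hN' := hN.
have hrK : r <= KK.
  case: (leqP r KK) => // hlt.
  have : 2 ^ KK < 2 ^ r by rewrite ltn_exp2l.
  have : 2 ^ r <= 2 ^ 4 by rewrite leq_exp2l.
  lia.
by split => //; rewrite -expnD subnK.
Qed.

Lemma sat_lc (c : 'I_m) : clause_sat lit a c -> a (cv c) = (lit c (lc c)).2.
Proof.
rewrite /cv /lc; case: (boolP (a (lit c false).1 == (lit c false).2)) => h /=.
  by move=> _; apply/eqP.
case/existsP => [[]] /eqP // E; by rewrite E eqxx in h.
Qed.

Definition cpair (c : 'I_m) : nat * nat := ((co c).+1, 2 ^ (3 - co c) * cv c).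

Lemma final_lb :
  n + #|[set c : 'I_m | clause_sat lit a c]| <= tournament_value (Tphi_value lit occ) sigma.
Proof.
set sat := [set c : 'I_m | clause_sat lit a c].
set S := [seq (1, 8 * nat_of_ord i + 4) | i : 'I_n <- enum 'I_n] ++ [seq cpair c | c <- enum sat].
have -> : n + #|sat| = size S.
  by rewrite /S size_cat !size_map -enumT size_enum_ord -cardE.
rewrite /tournament_value.
apply: (sum_lb _ (fun r k => Tphi_value lit occ (winner sigma r.-1 k.*2) (winner sigma r.-1 k.*2.+1) r)).
  rewrite cat_uniq; apply/and3P; split.
  - rewrite map_inj_uniq ?enum_uniq // => i j [] E; apply: val_inj => /=; lia.
  - apply/hasPn => x /mapP [c _ ->]; apply/negP => /mapP [i _ [E1 E2]].
    have E0 : co c = 0 by lia.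
    rewrite E0 subn0 in E2; lia.
  - rewrite map_inj_uniq ?enum_uniq // => c c' [E1].
    have Eo : co c = co c' by lia.
    rewrite -Eo => /eqP; rewrite eqn_pmul2l ?expn_gt0 // => /eqP Ev.
    by have [-> _] := Hocc _ _ _ _ (val_inj Ev) (val_inj Eo).
move=> x; rewrite mem_cat => /orP [] /mapP.
  case=> i _ -> /=.
  have hi := ltn_ord i; have hN' := hN.
  have [h1 h2] := @KK_ge 1 isT ltac:(lia).
  split; [lia | lia |].
  rewrite (_ : (8 * i + 4).*2 = 16 * i + 8); last lia.
  rewrite (_ : (16 * i + 8).+1 = 16 * i + 9); last lia.
  rewrite (player_at_eq _ _ _ _ (sig_xi i)) (player_at_eq _ _ _ _ (sig_li i)).
  rewrite /Tphi_value; suff -> : var_game n (xi i) (li i) 1 by [].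
  rewrite /var_game xiE liE; case: (a i); repeat (apply/andP; split); lia.
case=> c; rewrite mem_enum inE => hsat -> /=.
have hi := ltn_ord (cv c); have hN' := hN; have ho := co_lt c.
have [h1 h2] := @KK_ge ((co c).+1) ltac:(lia) ltac:(lia).
split; first lia.
  have : co c = 0 \/ co c = 1 \/ co c = 2 by lia.
  case=> E; [|case: E => E]; rewrite E in h2 *; rewrite ?subSS ?subn0 in h2 *; lia.
have -> : (2 ^ (3 - co c) * cv c).*2 = 2 ^ (4 - co c) * cv c.
  have : co c = 0 \/ co c = 1 \/ co c = 2 by lia.
  case=> E; [|case: E => E]; rewrite E ?subSS ?subn0; lia.
rewrite win_c (win_w _ _ ho).
rewrite /Tphi_value; suff -> : clause_game lit occ (cp c) (wi (cv c)) (co c).+1.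
  by rewrite !orbT.
rewrite /clause_game cpE wiE; have hc := ltn_ord c.
apply/and4P; split; try (case: (a (cv c)); lia).
apply/existsP; exists c; apply/existsP; exists (lc c); apply/and4P; split.
- apply/eqP => /=; lia.
- rewrite -/(cv c); apply/eqP => /=. case: (a (cv c)); lia.
- by [].
- rewrite -(sat_lc _ hsat); apply/eqP; case: (a (cv c)); lia.
Qed.

End Sig.
End Main.


Theorem lemma1 (n m : nat) (lit : 'I_m -> bool -> 'I_n * bool)
  (occ : 'I_m -> bool -> 'I_3) (Hocc : occurrence_numbering lit occ) (k : nat) :
  (exists a : 'I_n -> bool, k <= #|[set c : 'I_m | clause_sat lit a c]|) ->
  exists sigma : {perm 'I_(2 ^ nprime n)},
    k + n <= tournament_value (Tphi_value lit occ) sigma.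
Proof.
case=> a ha.
have [sigma Hs] := exists_sigma _ _ _ _ Hocc a.
exists sigma; apply: leq_trans _ (final_lb _ _ _ _ Hocc a sigma Hs); lia.
Qed.
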